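(* Let $\Pi=(P,\mathcal{L})$ and $\Pi'=(P',\mathcal{L}')$ be $n$-dimensional linear spaces, $n\ge 4$, both satisfying the exchange axiom and the axiom (P2). If $f:\mathcal{L}\to\mathcal{L}'$ is an injection sending every base subset of $\mathcal{G}_1(\Pi)=\mathcal{L}$ to a base subset of $\mathcal{G}_1(\Pi')=\mathcal{L}'$, then there is a strong embedding $g$ of $\Pi$ to $\Pi'$ such that $f(L)=\overline{g(L)}$ for every line $L\in\mathcal{L}$.
   Context: A linear space $\Pi=(P,\mathcal{L})$ is a set $P$ of points with a family $\mathcal{L}$ of proper subsets (lines) such that each line has at least two points and any two distinct points $p,q$ lie on exactly one line $pq$. Points are collinear if some line contains them. A subspace is a set $S\subset P$ with $pq\subset S$ for all distinct $p,q\in S$; $\overline{X}$ is the smallest subspace containing $X$. A set $X$ is independent if $\overline{X}$ is not spanned by a proper subset of $X$; a base of a subspace $S$ is an independent set spanning $S$. A subspace is $m$-dimensional if $m+1$ is the smallest number of points spanning it. Exchange axiom: for every $X\subset P$ and $p_1,p_2\in P\setminus\overline{X}$, $p_2\in\overline{X\cup\{p_1\}}$ implies $p_1\in\overline{X\cup\{p_2\}}$. Axiom (P2): every line contains at least three points. $\mathcal{G}_k(\Pi)$ is the set of $k$-dimensional subspaces. For a base $B$ of $\Pi$, the base subset of $\mathcal{G}_k(\Pi)$ associated with $B$ is the set of all $k$-dimensional subspaces spanned by points of $B$. A strong embedding of $\Pi$ to $\Pi'$ is an injection $g:P\to P'$ sending collinear triples to collinear triples, non-collinear triples to non-collinear triples,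 and independent sets to independent sets. *)

(* Defs.v *)
From mathcomp Require Import all_boot.
From mathcomp Require Import classical_sets.
From Stdlib Require List.

Set Implicit Arguments.
Unset Strict Implicit.
Unset Printing Implicit Defensive.
Local Open Scope classical_set_scope.

Section LinearSpaces.
Variable P : Type.
Variable Lines : set (set P).

Definition is_linear_space : Prop :=
  (forall l, Lines l -> l <> setT) /\
  (forall l, Lines l -> exists p q, p <> q /\ l p /\ l q) /\
  (forall p q, p <> q -> exists! l, Lines l /\ l p /\ l q).

Definition collinear (p q r : P) : Prop :=
  exists l, Lines l /\ l p /\ l q /\ l r.

Definition subspace (S : set P) : Prop :=
  forall p q, S p -> S q -> p <> q ->
    forall l, Lines l -> l p -> l q -> l `<=` S.

Definition lclosure (X : set P) : set P :=
  [set x | forall S, subspace S -> X `<=` S -> S x].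

Definition independent (X : set P) : Prop :=
  forall Y, Y `<=` X -> Y <> X -> lclosure Y <> lclosure X.

Definition base_of (S B : set P) : Prop := independent B /\ lclosure B = S.

Definition spanned_by_k (S : set P) (k : nat) : Prop :=
  exists s : list P, List.NoDup s /\ List.length s = k /\ lclosure [set x | List.In x s] = S.

Definition dimension (S : set P) (m : nat) : Prop :=
  subspace S /\ spanned_by_k S m.+1 /\ (forall k, (k < m.+1)%N -> ~ spanned_by_k S k).

Definition Grass (k : nat) : set (set P) := [set S | dimension S k].

Definition exchange_axiom : Prop :=
  forall (X : set P) (p1 p2 : P), ~ lclosure X p1 -> ~ lclosure X p2 ->
    lclosure (X `|` [set p1]) p2 -> lclosure (X `|` [set p2]) p1.

Definition axiom_P2 : Prop :=
  forall l, Lines l -> exists p q r, l p /\ l q /\ l r /\ p <> q /\ p <> r /\ q <> r.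

Definition base_subset (k : nat) (B : set P) : set (set P) :=
  [set S | Grass k S /\ exists X, X `<=` B /\ lclosure X = S].

Definition is_base_subset (k : nat) (A : set (set P)) : Prop :=
  exists B, base_of setT B /\ A = base_subset k B.

End LinearSpaces.

Definition strong_embedding (P P' : Type) (L : set (set P)) (L' : set (set P'))
  (g : P -> P') : Prop :=
  [/\ (forall x y, g x = g y -> x = y),
      (forall p q r, collinear L p q r -> collinear L' (g p) (g q) (g r)),
      (forall p q r, ~ collinear L p q r -> ~ collinear L' (g p) (g q) (g r)) &
      (forall X, independent L X -> independent L' (g @` X))].

(* Main.v *)
Require Import Defs.
From mathcomp Require Import all_boot.
From mathcomp Require Import classical_sets.
From mathcomp Require Import boolp.
From Stdlib Require Import Classical Lia.
From Stdlib Require List.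
Set Implicit Arguments. Unset Strict Implicit. Unset Printing Implicit Defensive.
Local Open Scope classical_set_scope.

Lemma pig_len (A B : Type) (R : A -> B -> Prop) (l1 : list A) : forall (l2 : list B),
  List.NoDup l1 ->
  (forall a, List.In a l1 -> exists b, List.In b l2 /\ R a b) ->
  (forall a a' b, List.In a l1 -> List.In a' l1 -> R a b -> R a' b -> a = a') ->
  (length l1 <= length l2)%coq_nat.
Proof.
elim: l1 => [|a l1 IH] l2 nd hm hi /=; first lia.
have [na nd1] := proj1 (List.NoDup_cons_iff a l1) nd.
have [b [inb rab]] := hm a (or_introl erefl).
have [m1 [m2 e]] := List.in_split b l2 inb.
have : (length l1 <= length (List.app m1 m2))%coq_nat.
  apply: IH => //.
  - move=> a' ina'. have [b' [inb' rb']] := hm a' (or_intror ina').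
    exists b'; split => //.
    have nb : b' <> b.
      move=> eb; subst b'. have := hi a a' b (or_introl erefl) (or_intror ina') rab rb'.
      by move=> ea; subst a'.
    move: inb'; rewrite e !List.in_app_iff /= => -[|[|]]; auto.
    by move=> ebb; case: nb.
  - move=> x y z ix iy; exact: hi (or_intror ix) (or_intror iy).
rewrite e !List.length_app /=. lia.
Qed.

Lemma pig_surj (A B : Type) (R : A -> B -> Prop) (l1 : list A) (l2 : list B) :
  List.NoDup l1 -> (length l2 <= length l1)%coq_nat ->
  (forall a, List.In a l1 -> exists b, List.In b l2 /\ R a b) ->
  (forall a a' b, List.In a l1 -> List.In a' l1 -> R a b -> R a' b -> a = a') ->
  forall b, List.In b l2 -> exists a, List.In a l1 /\ R a b.
Proof.
move=> nd hl hm hi b inb.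
apply: NNPP => hn.
have [m1 [m2 e]] := List.in_split b l2 inb.
have : (length l1 <= length (List.app m1 m2))%coq_nat.
  apply: (pig_len (R := R)) => // a ina.
  have [b' [inb' rb']] := hm a ina.
  exists b'; split => //.
  have nb : b' <> b by move=> eb; subst b'; apply: hn; exists a.
  move: inb'; rewrite e !List.in_app_iff /= => -[|[|]]; auto.
  by move=> ebb; case: nb.
move: hl; rewrite e !List.length_app /=. lia.
Qed.

Lemma remove_elt (T : Type) (l : list T) a : List.NoDup l -> List.In a l ->
  exists l', List.NoDup l' /\ length l = S (length l') /\
    forall x, List.In x l' <-> (List.In x l /\ x <> a).
Proof.
move=> nd ina.
have [l1 [l2 e]] := List.in_split a l ina. subst l.
exists (List.app l1 l2); split; first exact: List.NoDup_remove_1 nd.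
split; first by rewrite !List.length_app /=; lia.
have na := List.NoDup_remove_2 _ _ _ nd.
move=> x; rewrite !List.in_app_iff /=; split.
- move=> h; split; first by case: h; auto.
  by move=> ex; subst x; apply: na; rewrite List.in_app_iff.
- by case=> -[|[|]] //; auto; move=> ex ne; case: ne.
Qed.

Lemma pick_avoid (T : Type) (l xs : list T) : List.NoDup l ->
  (length xs < length l)%coq_nat -> exists y, List.In y l /\ ~ List.In y xs.
Proof.
move=> nd hl; apply: NNPP => hn.
have : (length l <= length xs)%coq_nat.
  apply: (List.NoDup_incl_length nd) => y iny.
  by apply: NNPP => ny; apply: hn; exists y.
lia.
Qed.

Definition ls (T : Type) (l : list T) : set T := [set x | List.In x l].

Section Geo.
Variables (P : Type) (L : set (set P)).
Hypothesis HL : is_linear_space L.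
Local Notation cl := (lclosure L).
Definition ln (u v : P) := cl (ls (u :: v :: nil)).

Lemma cl_ext X : X `<=` cl X.
Proof. by move=> x Xx S _ XS; exact: XS. Qed.

Lemma cl_min S X : subspace L S -> X `<=` S -> cl X `<=` S.
Proof. by move=> sS XS x; apply. Qed.

Lemma cl_subspace X : subspace L (cl X).
Proof.
move=> p q clp clq pq l Ll lp lq x lx S sS XS.
exact: (sS p q (clp S sS XS) (clq S sS XS) pq l Ll lp lq x lx).
Qed.

Lemma cl_cl X Y : X `<=` cl Y -> cl X `<=` cl Y.
Proof. by move=> h; apply: cl_min => //; exact: cl_subspace. Qed.

Lemma cl_mono X Y : X `<=` Y -> cl X `<=` cl Y.
Proof. by move=> h; apply: cl_cl => x /h; exact: cl_ext. Qed.

Lemma cl_small X : (forall p q, X p -> X q -> p = q) -> cl X `<=` X.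
Proof. by move=> h; apply: cl_min => // p q Xp Xq pq; case: pq; exact: h. Qed.

Lemma line_uniq l1 l2 p q : L l1 -> L l2 -> p <> q -> l1 p -> l1 q -> l2 p -> l2 q -> l1 = l2.
Proof.
move=> L1 L2 pq l1p l1q l2p l2q.
have [l [_ hu]] := HL.2.2 p q pq.
by rewrite -(hu l1) ?(hu l2).
Qed.

Lemma line_subspace l : L l -> subspace L l.
Proof.
move=> Ll p q lp lq pq l' Ll' l'p l'q.
by rewrite (line_uniq Ll' Ll pq l'p l'q lp lq).
Qed.

Lemma ln_u u v : ln u v u.
Proof. by apply: cl_ext; rewrite /ls /=; left. Qed.
Lemma ln_v u v : ln u v v.
Proof. by apply: cl_ext; rewrite /ls /=; right; left. Qed.

Lemma line_cl2 l u v : L l -> u <> v -> l u -> l v -> ln u v = l.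
Proof.
move=> Ll uv lu lv; apply/seteqP; split.
  apply: cl_min; first exact: line_subspace.
  by move=> x /= [<-|[<-|[]]].
have hs := @cl_subspace (ls (u :: v :: nil)).
exact: (hs u v (@ln_u u v) (@ln_v u v) uv l Ll lu lv).
Qed.

Lemma ln_line u v : u <> v -> L (ln u v).
Proof.
move=> uv; have [l [[Ll [lu lv]] _]] := HL.2.2 u v uv.
by rewrite (line_cl2 Ll uv lu lv).
Qed.

Lemma lnC u v : ln u v = ln v u.
Proof.
rewrite /ln; congr cl; apply/seteqP; split => x /=; rewrite /ls /=; tauto.
Qed.

Lemma ln_sub u v X : X u -> X v -> ln u v `<=` cl X.
Proof. move=> Xu Xv; apply: cl_mono => x /= [<-|[<-|[]]] //. Qed.

Lemma ln_sub_cl u v X : cl X u -> cl X v -> ln u v `<=` cl X.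
Proof. move=> Xu Xv; apply: cl_cl => x /= [<-|[<-|[]]] //. Qed.

Lemma line_two l : L l -> exists p q, p <> q /\ l p /\ l q.
Proof. by move=> Ll; exact: HL.2.1. Qed.

Lemma line_other l a : L l -> l a -> exists z, l z /\ z <> a.
Proof.
move=> Ll la; have [p [q [pq [lp lq]]]] := line_two Ll.
case: (classic (p = a)) => [ea|na]; last by exists p.
by subst a; exists q; split => // e; apply: pq.
Qed.

Lemma indep_char X : independent L X <-> (forall x, X x -> ~ cl (X `\ x) x).
Proof.
split.
- move=> hi x Xx hx.
  apply: (hi (X `\ x)).
  + by move=> y [].
  + move=> e; have h : (X `\ x) x by rewrite e.
    by case: h => _ /=; apply.
  + apply/seteqP; split; first by apply: cl_mono => y [].
    apply: cl_cl => y Xy.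
    case: (classic (y = x)) => [->//|nyx]; apply: cl_ext; by split.
- move=> h Y YX nYX e.
  have [x [Xx nYx]] : exists x, X x /\ ~ Y x.
    apply: NNPP => hn; apply: nYX; apply/seteqP; split => // y Xy.
    by apply: NNPP => nY; apply: hn; exists y.
  apply: (h x Xx).
  have : cl X x by exact: cl_ext.
  rewrite -e; apply: cl_mono => y Yy; split; first exact: YX.
  by move=> /= eyx; subst y.
Qed.

Lemma indep_sub X Y : Y `<=` X -> independent L X -> independent L Y.
Proof.
move=> YX /indep_char hX; apply/indep_char => y Yy hy.
apply: (hX y (YX y Yy)); move: hy; apply: cl_mono => z [Yz nz]; split => //.
exact: YX.
Qed.

Lemma indep_nil : independent L (ls (@nil P)).
Proof. by apply/indep_char => x []. Qed.

Hypothesis EX : exchange_axiom L.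

Lemma indep_add X p : independent L X -> ~ cl X p -> independent L (X `|` [set p]).
Proof.
move=> /indep_char hX np; apply/indep_char => z Xz hz.
case: (classic (z = p)) => [ezp|nzp].
  subst z; apply: np; move: hz; apply: cl_mono => y [[//|/= ->]] []; done.
have Xz' : X z by case: Xz => // /= e.
have nz : ~ cl (X `\ z) z by exact: hX.
have npz : ~ cl (X `\ z) p by move=> h; apply: np; move: h; apply: cl_mono => y [].
have h2 : cl ((X `\ z) `|` [set p]) z.
  move: hz; apply: cl_mono => y [[Xy|/= ->] nyz]; [by left|by right].
have := EX npz nz h2.
apply: contra_not np; apply: cl_mono => y [[]//|/= ->//].
Qed.

Lemma ls_cons (a : P) (l : list P) : ls (a :: l) = ls l `|` [set a].
Proof.
apply/seteqP; split => x /=; rewrite /ls /=.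
  by case=> [->|h]; [right|left].
by case=> [h|->]; [right|left].
Qed.

Lemma indep_cons (l : list P) (a : P) : independent L (ls l) -> ~ cl (ls l) a -> independent L (ls (a :: l)).
Proof. by rewrite ls_cons; exact: indep_add. Qed.


Lemma steinitz_gen (t : list P) : forall (X : set P) (l : list P),
  List.NoDup l -> independent L (X `|` ls l) -> (forall x, List.In x l -> ~ X x) ->
  (forall x, List.In x l -> cl (X `|` ls t) x) -> (length l <= length t)%coq_nat.
Proof.
elim: t => [|a t IH] X l nd hi hX hc.
- case: l nd hi hX hc => [|y l] nd hi hX hc /=; first lia.
  exfalso. move/indep_char: hi => hi.
  apply: (hi y); first by right; left.
  have := hc y (or_introl erefl).
  apply: cl_mono => x [Xx|[]]. split; first by left.
  by move=> /= exy; subst x; apply: (hX y (or_introl erefl)).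
- case: (classic (cl (X `|` ls t) a)) => [ha|ha].
  + have : (length l <= length t)%coq_nat.
      apply: IH nd hi hX _ => x inx; move: (hc x inx).
      apply: cl_cl => y [Xy|[<-|yt]] //; first by apply: cl_ext; left.
      by apply: cl_ext; right.
    simpl; lia.
  + case: (classic (exists y, List.In y l /\ ~ cl (X `|` ls t) y)) => [[y [iny ny]]|hn].
    * have hy : cl ((X `|` ls t) `|` [set a]) y.
        move: (hc y iny); apply: cl_mono => z [Xz|[<-|zt]].
        - by left; left.
        - by right.
        - by left; right.
      have hxa := EX ha ny hy.
      have [l' [nd' [el hl']]] := remove_elt nd iny.
      have : (length l' <= length t)%coq_nat.
        apply: (IH (X `|` [set y]) l' nd').
        - apply: indep_sub hi => z [[Xz|/= ->]|zl'].
          + by left.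
          + by right.
          + by right; exact: (proj1 (proj1 (hl' z) zl')).
        - move=> x inx [Xx|/= exy].
          + exact: (hX x (proj1 (proj1 (hl' x) inx)) Xx).
          + exact: (proj2 (proj1 (hl' x) inx)) exy.
        - move=> x inx; move: (hc x (proj1 (proj1 (hl' x) inx))).
          apply: cl_cl => z [Xz|[<-|zt]].
          + by apply: cl_ext; left; left.
          + move: hxa; apply: cl_mono => w [[Xw|wt]|/= ->].
            * by left; left.
            * by right.
            * by left; right.
          + by apply: cl_ext; right.
      rewrite el /=; lia.
    * have : (length l <= length t)%coq_nat.
        apply: IH nd hi hX _ => x inx. apply: NNPP => nx; apply: hn; by exists x.
      simpl; lia.
Qed.

Lemma steinitz l t : List.NoDup l -> independent L (ls l) -> ls l `<=` cl (ls t) ->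
  (length l <= length t)%coq_nat.
Proof.
move=> nd hi hs; apply: (@steinitz_gen t set0 l) => //.
- by rewrite set0U.
- by move=> x _ [].
- by move=> x inx; rewrite set0U; exact: hs.
Qed.

Lemma extend_gen (s : list P) : forall X, independent L X ->
  exists Y, X `<=` Y /\ independent L Y /\ ls s `<=` cl Y.
Proof.
elim: s => [|a s IH] X hX.
  by exists X; split => //; split => // x [].
case: (classic (cl X a)) => [ha|ha].
  have [Y [XY [hY hs]]] := IH X hX.
  exists Y; split => //; split => // x [<-|xs]; [exact: (cl_mono XY) | exact: hs].
have [Y [XY [hY hs]]] := IH _ (indep_add hX ha).
exists Y; split; first by move=> x Xx; apply: XY; left.
split => // x [<-|xs]; last exact: hs.
apply: cl_ext; apply: XY; by right.
Qed.

Lemma P2_other (HP2 : axiom_P2 L) l a b : L l -> exists q, l q /\ q <> a /\ q <> b.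
Proof.
move=> Ll; have [p [q [r [lp [lq [lr [pq [pr qr]]]]]]]] := HP2 l Ll.
case: (classic (p <> a /\ p <> b)) => [[h1 h2]|hp]; first by exists p.
case: (classic (q <> a /\ q <> b)) => [[h1 h2]|hq]; first by exists q.
exists r; split => //; split => e; subst r.
- apply: hq; split => eq; first by subst; apply: qr.
  subst; apply: hp; split => ep; subst; [by apply: pr | by apply: pq].
- apply: hq; split => eq; last by subst; apply: qr.
  subst; apply: hp; split => ep; subst; [by apply: pq | by apply: pr].
Qed.

Section Dim.
Variable n : nat.
Hypothesis Hdim : dimension L setT n.

Definition Pdec (x y : P) : {x = y} + {x <> y} := pselect (x = y).

Lemma small_not_span t : (length t <= n)%coq_nat -> cl (ls t) <> setT.
Proof.
move=> hl e.
have nd := List.NoDup_nodup Pdec t.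
have hl2 : (length (List.nodup Pdec t) <= length t)%coq_nat.
  apply: (List.NoDup_incl_length nd) => x; rewrite List.nodup_In. done.
apply: (Hdim.2.2 (length (List.nodup Pdec t))).
  apply/ltP. lia.
exists (List.nodup Pdec t); split => //; split => //.
rewrite -e; congr lclosure; apply/seteqP; split => x /=; rewrite List.nodup_In //.
Qed.

Lemma exists_out t : (length t <= n)%coq_nat -> exists x, ~ cl (ls t) x.
Proof.
move=> hl; apply: NNPP => hn; apply: (small_not_span hl).
apply/seteqP; split => // x _; apply: NNPP => nx; apply: hn; by exists x.
Qed.

Lemma extend X : independent L X -> exists Y, X `<=` Y /\ base_of L setT Y.
Proof.
move=> hX; have [s [_ [_ hs]]] := Hdim.2.1.
have [Y [XY [hY hsY]]] := extend_gen s hX.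
exists Y; split => //; split => //.
apply/seteqP; split => // x _.
have : cl (ls s) x by rewrite /ls hs.
exact: cl_cl hsY x.
Qed.

Lemma base_bound B l : base_of L setT B -> List.NoDup l -> ls l `<=` B ->
  (length l <= n.+1)%coq_nat.
Proof.
move=> [hB _] nd lB; have [s [nds [ls_ hs]]] := Hdim.2.1.
rewrite -ls_; apply: steinitz nd (indep_sub lB hB) _.
move=> x _; by rewrite /ls hs.
Qed.

Lemma grow (B : set P) : forall k, (exists l : list P, List.NoDup l /\ ls l `<=` B /\ length l = k) \/
  (exists l : list P, List.NoDup l /\ ls l `<=` B /\ B `<=` ls l).
Proof.
elim => [|k [[l [nd [lB e]]]|h]].
- by left; exists nil; split; [constructor|split => // x []].
- case: (classic (B `<=` ls l)) => [h|h]; first by right; exists l.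
  have [x [Bx nx]] : exists x, B x /\ ~ ls l x.
    apply: NNPP => hn; apply: h => x Bx; apply: NNPP => nx; apply: hn; by exists x.
  left; exists (x :: l); split; first by constructor.
  split; last by rewrite /= e.
  by move=> y [<-|yl]; [|exact: lB].
- by right.
Qed.

Lemma base_list B : base_of L setT B -> exists b, List.NoDup b /\ length b = n.+1 /\ B = ls b.
Proof.
move=> hB.
have [[l [nd [lB e]]]|[l [nd [lB Bl]]]] := grow B n.+2.
  have := base_bound hB nd lB; lia.
have eB : B = ls l by apply/seteqP; split.
exists l; split => //; split => //.
have h1 := base_bound hB nd lB.
have h2 : ~ (length l <= n)%coq_nat.
  move=> h; apply: (small_not_span h); rewrite -eB; exact: hB.2.
lia.
Qed.

End Dim.

Lemma on_base_line B u v c : independent L B -> B u -> B v -> B c -> ln u v c -> c = u \/ c = v.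
Proof.
move=> /indep_char hB Bu Bv Bc hc; apply: NNPP => hn.
apply: (hB c Bc); move: hc; apply: cl_mono => x /= [<-|[<-|[]]]; split => // e.
- by apply: hn; left; rewrite e.
- by apply: hn; right; rewrite e.
Qed.

Lemma base_lines_eq B u v w z : independent L B -> B u -> B v -> B w -> B z -> u <> v -> w <> z ->
  ln u v = ln w z -> (w = u /\ z = v) \/ (w = v /\ z = u).
Proof.
move=> hB Bu Bv Bw Bz uv wz e.
have hw : ln u v w by rewrite e; exact: ln_u.
have hz : ln u v z by rewrite e; exact: ln_v.
case: (on_base_line hB Bu Bv Bw hw) => ew; case: (on_base_line hB Bu Bv Bz hz) => ez;
  subst; auto; by case: wz.
Qed.

Lemma base_meet B u v w z r : independent L B -> B u -> B v -> B w -> B z -> u <> v -> w <> z ->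
  ln u v <> ln w z -> ln u v r -> ln w z r -> B r.
Proof.
move=> hB Bu Bv Bw Bz uv wz ne r1 r2; apply: NNPP => nr.
have ne_r : forall x, B x -> x <> r by move=> x Bx e; apply nr; rewrite -e.
have common : forall e, ln u v e -> ln w z e -> B e -> False.
  move=> e e1 e2 Be.
  by apply: ne; apply: (line_uniq (ln_line uv) (ln_line wz) (ne_r e Be)).
case: (classic (w = u)) => [ewu|nwu].
  by apply: (common w) => //; [rewrite ewu; exact: ln_u | exact: ln_u].
case: (classic (w = v)) => [ewv|nwv].
  by apply: (common w) => //; [rewrite ewv; exact: ln_v | exact: ln_u].
case: (classic (z = u)) => [ezu|nzu].
  by apply: (common z) => //; [rewrite ezu; exact: ln_u | exact: ln_v].
case: (classic (z = v)) => [ezv|nzv].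
  by apply: (common z) => //; [rewrite ezv; exact: ln_v | exact: ln_v].
have e1 : ln w r = ln w z.
  apply: (@line_cl2 (ln w z) w r (ln_line wz) _ (@ln_u w z) r2).
  by move=> e; apply: (ne_r w Bw).
move/indep_char: hB => hB; apply: (hB z Bz).
have : ln w r z by rewrite e1; exact: ln_v.
apply: ln_sub_cl.
  by apply: cl_ext; split => // /= e; apply: wz.
move: r1; apply: ln_sub; split => // /= e.
- by apply: nzu.
- by apply: nzv.
Qed.

Lemma three_noncol B u v w : independent L B -> B u -> B v -> B w -> u <> v -> w <> u -> w <> v ->
  ~ collinear L u v w.
Proof.
move=> hB Bu Bv Bw uv wu wv [l [Ll [lu [lv lw]]]].
have e := line_cl2 Ll uv lu lv.
have : ln u v w by rewrite e.
by case/(on_base_line hB Bu Bv Bw).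
Qed.

Lemma line_thru_base B u v c : independent L B -> B u -> B v -> B c -> u <> v -> ln u v c ->
  exists x, B x /\ x <> c /\ ln u v = ln c x.
Proof.
move=> hB Bu Bv Bc uv hc.
case: (on_base_line hB Bu Bv Bc hc) => ->.
- by exists v; split => //; split => // e; apply: uv.
- by exists u; split => //; split; [|exact: lnC].
Qed.

Lemma bs_char B S : independent L B ->
  (base_subset L 1 B S <-> exists u v, B u /\ B v /\ u <> v /\ S = ln u v).
Proof.
move=> hB; split.
- move=> [[hsub [[s [nds [hl2 hs]]] _]] [X [XB hX]]].
  case: s nds hl2 hs => [|x [|y [|z s]]] nds hl2 hs //.
  have xy : x <> y.
    move=> e; subst y; move/List.NoDup_cons_iff: nds => [h _]; apply: h; by left.
  have hS : ln x y = S by exact: hs.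
  have LS : L S by rewrite -hS; exact: ln_line.
  case: (classic (exists u v, X u /\ X v /\ u <> v)) => [[u [v [Xu [Xv uv]]]]|hn].
  + exists u, v; split; first exact: XB.
    split; first exact: XB.
    split => //.
    have Su : S u by rewrite -hX; exact: cl_ext.
    have Sv : S v by rewrite -hX; exact: cl_ext.
    exact: (line_uniq LS (ln_line uv) uv Su Sv (@ln_u u v) (@ln_v u v)).
  + exfalso.
    have hs' : cl X `<=` X.
      apply: cl_small => p q Xp Xq; apply: NNPP => pq; apply: hn; by exists p, q.
    have Xx : X x by apply: hs'; rewrite hX -hS; exact: ln_u.
    have Xy : X y by apply: hs'; rewrite hX -hS; exact: ln_v.
    apply: hn; by exists x, y.
- move=> [u [v [Bu [Bv [uv ->]]]]]; split.
  + split; first exact: cl_subspace.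
    split.
      exists (u :: v :: nil); split => //.
      constructor; last by constructor; [move=> []|constructor].
      by move=> [e|[]]; apply: uv.
    move=> k hk [s [nds [hl hs]]].
    case: s nds hl hs => [|a [|b s]] nds hl hs.
    * have : cl (ls nil) u by rewrite /ls hs; exact: ln_u.
      by move/(cl_small (fun p q (hp : ls nil p) => False_ind _ hp)).
    * have hu : cl (ls (a :: nil)) u by rewrite /ls hs; exact: ln_u.
      have hv : cl (ls (a :: nil)) v by rewrite /ls hs; exact: ln_v.
      have : forall p q, ls (a :: nil) p -> ls (a :: nil) q -> p = q.
        by move=> p q [<-|[]] [<-|[]].
      move/cl_small => hsm.
      case: (hsm u hu) => // eu; case: (hsm v hv) => // ev.
      by apply: uv; rewrite -eu -ev.
    * by move: hk; rewrite -hl.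
  + exists (ls (u :: v :: nil)); split => //.
    by move=> x /= [<-|[<-|[]]].
Qed.

End Geo.

Lemma lnu T (K : set (set T)) (u v : T) : ln K u v u. Proof. exact: ln_u. Qed.
Lemma lnv T (K : set (set T)) (u v : T) : ln K u v v. Proof. exact: ln_v. Qed.
Arguments lnu {T} K u v.
Arguments lnv {T} K u v.

Definition baseL (T : Type) (K : set (set T)) (n : nat) (b : list T) :=
  List.NoDup b /\ length b = n.+1 /\ base_of K setT (ls b).

Section Main.
Variables (P P' : Type) (L : set (set P)) (L' : set (set P')) (n : nat) (f : set P -> set P').
Hypotheses (HL : is_linear_space L) (HL' : is_linear_space L') (Hn : (4 <= n)%N)
  (Hd : dimension L setT n) (Hd' : dimension L' setT n)
  (EX : exchange_axiom L) (EX' : exchange_axiom L')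
  (HP2 : axiom_P2 L)
  (Hf : forall l, L l -> L' (f l))
  (Hfi : forall l1 l2, L l1 -> L l2 -> f l1 = f l2 -> l1 = l2)
  (Hfb : forall A, is_base_subset L 1 A -> is_base_subset L' 1 (f @` A)).

Local Notation cl := (lclosure L).
Local Notation cl' := (lclosure L').
Local Notation lnL := (ln L).
Local Notation lnL' := (ln L').
Local Notation AL b := (base_subset L 1 (ls b)).
Local Notation AL' b := (base_subset L' 1 (ls b)).

Definition corr (b : list P) (b' : list P') := f @` AL b = AL' b'.

Lemma Hn' : (4 <= n)%coq_nat. Proof. exact/leP. Qed.

Lemma get_corr b : baseL L n b -> exists b', baseL L' n b' /\ corr b b'.
Proof.
move=> hb.
have [B' [hB' e]] := Hfb (ex_intro _ (ls b) (conj hb.2.2 erefl)).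
have [b' [nd' [l' eB']]] := base_list EX' Hd' hB'.
subst B'; exists b'; split => //.
Qed.

Lemma get_base X : independent L X ->
  exists b b', baseL L n b /\ X `<=` ls b /\ baseL L' n b' /\ corr b b'.
Proof.
move=> hX.
have [Y [XY hY]] := extend EX Hd hX.
have [b [nd [lb eY]]] := base_list EX Hd hY.
subst Y.
have hb : baseL L n b by split => //.
have [b' [hb' hc]] := get_corr hb.
by exists b, b'.
Qed.

Lemma corr_fwd b b' u v : baseL L n b -> baseL L' n b' -> corr b b' ->
  List.In u b -> List.In v b -> u <> v ->
  exists u' v', List.In u' b' /\ List.In v' b' /\ u' <> v' /\ f (lnL u v) = lnL' u' v'.
Proof.
move=> hb hb' hc inu inv uv.
have : (f @` AL b) (f (lnL u v)).
  exists (lnL u v) => //; apply/(bs_char HL _ hb.2.2.1); by exists u, v.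
rewrite hc => /(bs_char HL' _ hb'.2.2.1) [u' [v' [iu [iv [uv' e]]]]].
by exists u', v'.
Qed.

Lemma corr_bwd b b' u' v' : baseL L n b -> baseL L' n b' -> corr b b' ->
  List.In u' b' -> List.In v' b' -> u' <> v' ->
  exists u v, List.In u b /\ List.In v b /\ u <> v /\ f (lnL u v) = lnL' u' v'.
Proof.
move=> hb hb' hc inu inv uv.
have : AL' b' (lnL' u' v') by apply/(bs_char HL' _ hb'.2.2.1); exists u', v'.
rewrite -hc => -[l /(bs_char HL _ hb.2.2.1) [u [v [iu [iv [uv0 el]]]]] fl].
by exists u, v; subst l.
Qed.

Lemma f_ln_inj u v w z : u <> v -> w <> z -> f (lnL u v) = f (lnL w z) -> lnL u v = lnL w z.
Proof. by move=> uv wz; apply: Hfi; apply: (ln_line HL). Qed.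


Lemma star0 b b' p p1 : baseL L n b -> baseL L' n b' -> corr b b' ->
  List.In p b -> List.In p1 b -> p <> p1 ->
  exists beta, List.In beta b' /\
    forall x, List.In x b -> x <> p -> x <> p1 -> f (lnL p x) beta.
Proof.
move=> hb hb' hc inp inp1 pp1.
have [ndb [lb [ib sb]]] := hb.
have [ndb' [lb' [ib' sb']]] := hb'.
have [q [qon [qp qp1]]] := P2_other HP2 p p1 (ln_line HL pp1).
have [c [ndc [lc hcm]]] := remove_elt ndb inp.
have qnb : ~ List.In q b.
  move=> inq; case: (on_base_line ib inp inp1 inq qon) => e; [exact: qp e|exact: qp1 e].
have p1c : List.In p1 c by apply/hcm; split => // e; apply: pp1.
have cb : forall x, List.In x c -> List.In x b by move=> x /hcm [].
have lnq : lnL q p1 = lnL p p1.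
  exact: (line_cl2 HL (ln_line HL pp1) qp1 qon (lnv L p p1)).
have nqc : ~ cl (ls c) q.
  move=> hq; move/indep_char: ib => ib2; apply: (ib2 p inp).
  have : lnL q p1 p by rewrite lnq; exact: lnu.
  have h1 : lnL q p1 `<=` cl (ls c) by apply: ln_sub_cl => //; exact: cl_ext.
  move/h1; apply: cl_mono => x xc; split; first exact: cb.
  by move=> /= e; subst x; move/hcm: xc => [_ []].
have hb2 : baseL L n (q :: c).
  split; first by constructor => // /cb.
  split; first by rewrite /= -lc.
  split; first by apply: indep_cons => //; apply: indep_sub ib => x /cb.
  apply/seteqP; split => // x _.
  have : cl (ls b) x by rewrite sb.
  apply: cl_cl => y yb.
  case: (classic (y = p)) => [->|yp].
    have h3 : lnL q p1 p by rewrite lnq; exact: lnu.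
    by apply: (ln_sub (X := ls (q :: c)) _ _ h3); [left|right].
  by apply: cl_ext; right; apply/hcm.
have [b'' [hb'' hc2]] := get_corr hb2.
have [ndb'' [lb'' [ib'' sb'']]] := hb''.
have ib2 := hb2.2.2.1.
have [beta [inbeta nbeta]] : exists beta, List.In beta b' /\ ~ List.In beta b''.
  apply: NNPP => hn.
  have sub1 : forall y, List.In y b' -> List.In y b''.
    by move=> y iy; apply: NNPP => ny; apply: hn; exists y.
  have sub2 : forall y, List.In y b'' -> List.In y b'.
    move=> y iy; apply: NNPP => ny.
    move/indep_char: ib'' => h; apply: (h y iy).
    have : cl' (ls b') y by rewrite sb'.
    apply: cl_mono => z iz; split; first exact: sub1.
    by move=> /= e; subst; apply: ny.
  have eb : ls b' = ls b'' by apply/seteqP; split => z; [exact: sub1|exact: sub2].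
  have [x [inx nx]] := pick_avoid (xs := p :: p1 :: nil) ndb ltac:(rewrite lb /=; have := Hn'; lia).
  have xp : x <> p by move=> e; apply: nx; left.
  have xp1 : x <> p1 by move=> e; apply: nx; right; left.
  have xc : List.In x c by apply/hcm.
  have qx : q <> x by move=> e; subst; apply: qnb.
  have : (f @` AL (q :: c)) (f (lnL q x)).
    exists (lnL q x) => //; apply/(bs_char HL _ ib2); exists q, x.
    by split; [left|split; [right|]].
  rewrite hc2 -eb -hc => -[l /(bs_char HL _ ib) [u [v [iu [iv [uv el]]]]] fl].
  subst l.
  have e2 := f_ln_inj uv qx fl.
  apply: qnb.
  apply: (base_meet HL ib inp inp1 iu iv pp1 uv) => //.
  - move=> e3; have : lnL p p1 x by rewrite e3 e2; exact: lnv.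
    by case/(on_base_line ib inp inp1 inx).
  - by rewrite e2; exact: lnu.
have [m [ndm [lm hm]]] := remove_elt ndb' inbeta.
have atmost : forall u u', List.In u m -> List.In u' m ->
    AL' b'' (lnL' beta u) -> AL' b'' (lnL' beta u') -> u = u'.
  move=> u u' im im' /(bs_char HL' _ ib'') [w [z [iw [iz [wz e1]]]]]
    /(bs_char HL' _ ib'') [w' [z' [iw' [iz' [wz' e1']]]]].
  apply: NNPP => uu'.
  have [iub nub] := proj1 (hm u) im.
  have [iub' nub'] := proj1 (hm u') im'.
  apply: nbeta.
  apply: (base_meet HL' ib'' iw iz iw' iz' wz wz').
  - rewrite -e1 -e1' => e3.
    case: (base_lines_eq ib' inbeta iub inbeta iub' (fun e => nub (esym e)) (fun e => nub' (esym e)) e3).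
      by move=> [_ e4]; apply: uu'; rewrite e4.
    by move=> [e4 _]; apply: nub; rewrite e4.
  - by rewrite -e1; exact: lnu.
  - by rewrite -e1'; exact: lnu.
have [G [ndG [lG hG]]] : exists G : list P', List.NoDup G /\
    (length m <= S (length G))%coq_nat /\
    forall u, List.In u G -> List.In u b' /\ u <> beta /\ ~ AL' b'' (lnL' beta u).
  case: (classic (exists u0, List.In u0 m /\ AL' b'' (lnL' beta u0))) => [[u0 [iu0 hu0]]|hn].
  - have [G [ndG [lG hG]]] := remove_elt ndm iu0.
    exists G; split => //; split; first lia.
    move=> u iuG; have [ium nu0] := proj1 (hG u) iuG.
    have [iu nu] := proj1 (hm u) ium; split => //; split => // h.
    exact: nu0 (atmost u u0 ium iu0 h hu0).
  - exists m; split => //; split; first lia.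
    move=> u /[dup] iu /hm [iu' nu]; split => //; split => // h.
    by apply: hn; exists u.
have [D [ndD [lD hD]]] := remove_elt ndc p1c.
have hD' : forall x, List.In x D <-> (List.In x b /\ x <> p /\ x <> p1).
  move=> x; rewrite hD hcm; tauto.
have hlen : (length D <= length G)%coq_nat by move: lb lb' lc lm lG lD; lia.
have hmaps : forall u, List.In u G -> exists x, List.In x D /\ f (lnL p x) = lnL' beta u.
  move=> u /hG [iub [nub nA]].
  have : AL' b' (lnL' beta u).
    apply/(bs_char HL' _ ib'); exists beta, u; split => //; split => //; split => //.
    by move=> e; apply: nub.
  rewrite -hc => -[l /(bs_char HL _ ib) [u1 [v1 [iu1 [iv1 [uv1 el]]]]] fl].
  subst l.
  have nA2 : ~ AL (q :: c) (lnL u1 v1).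
    by move=> h; apply: nA; rewrite -hc2 -fl; exists (lnL u1 v1).
  case: (classic (u1 = p)) => [eu1|nu1].
    subst u1.
    case: (classic (v1 = p1)) => [ev1|nv1].
      subst v1; exfalso; apply: nA2; apply/(bs_char HL _ ib2); exists q, p1.
      split; first by left.
      split; first by right.
      by split => //; rewrite lnq.
    by exists v1; split => //; apply/hD'; split => //; split => // e; apply: uv1.
  case: (classic (v1 = p)) => [ev1|nv1].
    subst v1.
    case: (classic (u1 = p1)) => [eu1|nu1'].
      subst u1; exfalso; apply: nA2; apply/(bs_char HL _ ib2); exists q, p1.
      split; first by left.
      split; first by right.
      by split => //; rewrite lnq lnC.
    by exists u1; split; [apply/hD'|rewrite lnC].
  exfalso; apply: nA2; apply/(bs_char HL _ ib2); exists u1, v1.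
  split; first by right; apply/hcm.
  split; first by right; apply/hcm.
  by [].
have hinj : forall u u' x0, List.In u G -> List.In u' G ->
    f (lnL p x0) = lnL' beta u -> f (lnL p x0) = lnL' beta u' -> u = u'.
  move=> u u' x0 iu iu' e1 e2.
  have [iub [nub _]] := hG u iu.
  have [iub' [nub' _]] := hG u' iu'.
  have e3 : lnL' beta u = lnL' beta u' by rewrite -e1 -e2.
  case: (base_lines_eq ib' inbeta iub inbeta iub' (fun e => nub (esym e)) (fun e => nub' (esym e)) e3).
    by move=> [_ ->].
  by move=> [e4 _]; case: nub; rewrite e4.
exists beta; split => // x ix xp xp1.
have [u [iu e]] := pig_surj (R := fun u x => f (lnL p x) = lnL' beta u) ndG hlen hmaps hinj (proj2 (hD' x) (conj ix (conj xp xp1))).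
by rewrite e; exact: lnu.
Qed.

Lemma star b b' p : baseL L n b -> baseL L' n b' -> corr b b' -> List.In p b ->
  exists beta, List.In beta b' /\ forall x, List.In x b -> x <> p -> f (lnL p x) beta.
Proof.
move=> hb hb' hc inp.
have [ndb [lb [ib sb]]] := hb.
have H4 := Hn'.
have [p1 [ip1 np1]] := pick_avoid (xs := p :: nil) ndb ltac:(rewrite lb /=; lia).
have [p2 [ip2 np2]] := pick_avoid (xs := p :: p1 :: nil) ndb ltac:(rewrite lb /=; lia).
have [x1 [ix1 nx1]] := pick_avoid (xs := p :: p1 :: p2 :: nil) ndb ltac:(rewrite lb /=; lia).
have [x2 [ix2 nx2]] := pick_avoid (xs := p :: p1 :: p2 :: x1 :: nil) ndb ltac:(rewrite lb /=; lia).
simpl in np1, np2, nx1, nx2.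
have pp1 : p <> p1 by move=> e; apply: np1; left.
have pp2 : p <> p2 by move=> e; apply: np2; left.
have p12 : p1 <> p2 by move=> e; apply: np2; right; left.
have px1 : p <> x1 by move=> e; apply: nx1; left.
have px2 : p <> x2 by move=> e; apply: nx2; left.
have x12 : x1 <> x2 by move=> e; apply: nx2; do 3 right; left.
have x1p1 : x1 <> p1 by move=> e; apply: nx1; right; left; rewrite e.
have x1p2 : x1 <> p2 by move=> e; apply: nx1; right; right; left; rewrite e.
have x2p1 : x2 <> p1 by move=> e; apply: nx2; right; left; rewrite e.
have x2p2 : x2 <> p2 by move=> e; apply: nx2; right; right; left; rewrite e.
have [b1 [ib1 h1]] := star0 hb hb' hc inp ip1 pp1.
have [b2 [ib2 h2]] := star0 hb hb' hc inp ip2 pp2.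
have e12 : b1 = b2.
  apply: NNPP => ne.
  have l1 := h1 x1 ix1 (fun e => px1 (esym e)) x1p1.
  have l1' := h2 x1 ix1 (fun e => px1 (esym e)) x1p2.
  have l2 := h1 x2 ix2 (fun e => px2 (esym e)) x2p1.
  have l2' := h2 x2 ix2 (fun e => px2 (esym e)) x2p2.
  have := line_uniq HL' (Hf (ln_line HL px1)) (Hf (ln_line HL px2)) ne l1 l1' l2 l2'.
  move/(f_ln_inj px1 px2) => e.
  case: (base_lines_eq ib inp ix1 inp ix2 px1 px2 e) => [[_ e']|[e' _]].
    by apply: x12; rewrite e'.
  by apply: px1.
exists b1; split => // x ix xp.
case: (classic (x = p1)) => [->|xp1]; last exact: h1.
rewrite e12; apply: h2 => //; by move=> e; apply: pp1; rewrite e.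
Qed.

Lemma uniqU X p x y z c : independent L X -> X p -> X x -> X y -> X z ->
  x <> p -> y <> p -> z <> p -> x <> y ->
  f (lnL p x) c -> f (lnL p y) c -> f (lnL p z) c.
Proof.
move=> hX Xp Xx Xy Xz xp yp zp xy cx cy.
have [b [b' [hb [Xb [hb' hc]]]]] := get_base hX.
have [beta [ib hbeta]] := star hb hb' hc (Xb p Xp).
have px : p <> x by move=> e; apply: xp; rewrite e.
have py : p <> y by move=> e; apply: yp; rewrite e.
have ex : c = beta.
  apply: NNPP => ne.
  have := line_uniq HL' (Hf (ln_line HL px)) (Hf (ln_line HL py)) ne cx
    (hbeta x (Xb x Xx) xp) cy (hbeta y (Xb y Xy) yp).
  move/(f_ln_inj px py) => e.
  case: (base_lines_eq hb.2.2.1 (Xb p Xp) (Xb x Xx) (Xb p Xp) (Xb y Xy) px py e) => [[_ e']|[e' _]].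
    by apply: xy; rewrite e'.
  by apply: px.
by rewrite ex; exact: (hbeta z (Xb z Xz) zp).
Qed.

Lemma cl_nil (a : P) : ~ cl (ls nil) a.
Proof. move=> h; exact: (cl_small (L := L) (X := ls nil) (fun u v (hu : ls nil u) _ => False_ind _ hu) h). Qed.

Lemma indep1 (p : P) : independent L (ls (p :: nil)).
Proof. apply: (indep_cons EX (@indep_nil P L)); exact: cl_nil. Qed.

Lemma cl1 (p x : P) : cl (ls (p :: nil)) x -> x = p.
Proof.
move=> h.
have hs : forall u v, ls (p :: nil) u -> ls (p :: nil) v -> u = v.
  by move=> u v [<-|[]] [<-|[]].
by case: (cl_small hs h).
Qed.

Lemma indep2 (p x : P) : x <> p -> independent L (ls (x :: p :: nil)).
Proof. move=> xp; apply: (indep_cons EX (@indep1 p)); by move/cl1. Qed.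

Ltac inls := rewrite /ls /=; auto 8.

Lemma gex p : exists c, forall l, L l -> l p -> f l c.
Proof.
have H4 := Hn'.
have [x hx] := exists_out Hd (t := p :: nil) ltac:(simpl; lia).
have xp : x <> p by move=> e; apply: hx; apply: cl_ext; left; rewrite e.
have [y hy] := exists_out Hd (t := x :: p :: nil) ltac:(simpl; lia).
have [w hw] := exists_out Hd (t := y :: x :: p :: nil) ltac:(simpl; lia).
have i2 := indep2 xp.
have i3 := indep_cons EX i2 hy.
have i4 := indep_cons EX i3 hw.
have yp : y <> p by move=> e; apply: hy; apply: cl_ext; rewrite e; inls.
have yx : y <> x by move=> e; apply: hy; apply: cl_ext; rewrite e; inls.
have wp : w <> p by move=> e; apply: hw; apply: cl_ext; rewrite e; inls.
have wx : w <> x by move=> e; apply: hw; apply: cl_ext; rewrite e; inls.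
have [b [b' [hb [Xb [hb' hc]]]]] := get_base i3.
have [c [ic hcb]] := star hb hb' hc (Xb p ltac:(inls)).
have cx : f (lnL p x) c by apply: hcb => //; apply: Xb; inls.
have cy : f (lnL p y) c by apply: hcb => //; apply: Xb; inls.
have cw : f (lnL p w) c.
  apply: (uniqU (X := ls (w :: y :: x :: p :: nil)) (x := x) (y := y)) => //; try inls.
exists c => l Ll lp.
have [z [lz zp]] := line_other HL Ll lp.
have pz : p <> z by move=> e; apply: zp; rewrite e.
have px : p <> x by move=> e; apply: xp; rewrite e.
have el : lnL p z = l := line_cl2 HL Ll pz lp lz.
rewrite -el.
case: (classic (cl (ls (y :: x :: p :: nil)) z)) => hz.
- case: (classic (lnL x p z)) => hz2.
  + have -> : lnL p z = lnL p x.
      apply: (line_uniq HL (ln_line HL pz) (ln_line HL px) pz); [exact: lnu|exact: lnv|exact: lnu|].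
      by rewrite lnC.
    exact: cx.
  + have i2' := indep_cons EX i2 hz2.
    have hw' : ~ cl (ls (z :: x :: p :: nil)) w.
      move=> h; apply: hw; move: h; apply: cl_cl => u [<-|[<-|[<-|[]]]] //; apply: cl_ext; inls.
    have i4' := indep_cons EX i2' hw'.
    apply: (uniqU (X := ls (w :: z :: x :: p :: nil)) (x := x) (y := w)) => //; try inls.
- have i4' := indep_cons EX i3 hz.
  apply: (uniqU (X := ls (z :: y :: x :: p :: nil)) (x := x) (y := y)) => //; try inls.
Qed.

Section G.
Variable g : P -> P'.
Hypothesis Gp : forall p l, L l -> l p -> f l (g p).

Lemma gbase b b' p : baseL L n b -> baseL L' n b' -> corr b b' -> List.In p b -> List.In (g p) b'.
Proof.
move=> hb hb' hc inp.
have H4 := Hn'.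
have [ndb [lb [ib sb]]] := hb.
have [x1 [ix1 nx1]] := pick_avoid (xs := p :: nil) ndb ltac:(rewrite lb /=; lia).
have [x2 [ix2 nx2]] := pick_avoid (xs := p :: x1 :: nil) ndb ltac:(rewrite lb /=; lia).
simpl in nx1, nx2.
have px1 : p <> x1 by move=> e; apply: nx1; left.
have px2 : p <> x2 by move=> e; apply: nx2; left.
have x12 : x1 <> x2 by move=> e; apply: nx2; right; left.
have [u1 [v1 [iu1 [iv1 [uv1 e1]]]]] := corr_fwd hb hb' hc inp ix1 px1.
have [u2 [v2 [iu2 [iv2 [uv2 e2]]]]] := corr_fwd hb hb' hc inp ix2 px2.
apply: (base_meet HL' hb'.2.2.1 iu1 iv1 iu2 iv2 uv1 uv2).
- rewrite -e1 -e2 => /(f_ln_inj px1 px2) e.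
  case: (base_lines_eq ib inp ix1 inp ix2 px1 px2 e) => [[_ e']|[e' _]].
    by apply: x12; rewrite e'.
  by apply: px1.
- rewrite -e1; apply: Gp; [exact: (ln_line HL) | exact: lnu].
- rewrite -e2; apply: Gp; [exact: (ln_line HL) | exact: lnu].
Qed.

Lemma ginj_base b b' p x : baseL L n b -> baseL L' n b' -> corr b b' ->
  List.In p b -> List.In x b -> p <> x -> g p <> g x.
Proof.
move=> hb hb' hc inp inx px egx.
have [ndb [lb [ib sb]]] := hb.
have [ndb' [lb' [ib' sb']]] := hb'.
have H4 := Hn'.
have [y [iy ny]] := pick_avoid (xs := p :: x :: nil) ndb ltac:(rewrite lb /=; lia).
simpl in ny.
have yp : y <> p by move=> e; apply: ny; left; rewrite e.
have xy : x <> y by move=> e; apply: ny; right; left.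
have ic : List.In (g p) b' := gbase hb hb' hc inp.
have [Dp [ndDp [lDp hDp]]] := remove_elt ndb inp.
have [Dc [ndDc [lDc hDc]]] := remove_elt ndb' ic.
have thru : forall u v, List.In u b -> List.In v b -> u <> v -> f (lnL u v) (g p) ->
    exists w, List.In w Dc /\ f (lnL u v) = lnL' (g p) w.
  move=> u v iu iv uv hcu.
  have [u' [v' [iu' [iv' [uv' e]]]]] := corr_fwd hb hb' hc iu iv uv.
  rewrite e in hcu *.
  have [w [iw [wc ew]]] := line_thru_base ib' iu' iv' ic uv' hcu.
  by exists w; split => //; apply/hDc.
have hmaps : forall z, List.In z Dp -> exists w, List.In w Dc /\ f (lnL p z) = lnL' (g p) w.
  move=> z /hDp [iz zp]; apply: thru => //; first by move=> e; apply: zp; rewrite e.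
  apply: Gp; [by apply: (ln_line HL) => e; apply: zp; rewrite e | exact: lnu].
have hinj : forall z z' w, List.In z Dp -> List.In z' Dp ->
    f (lnL p z) = lnL' (g p) w -> f (lnL p z') = lnL' (g p) w -> z = z'.
  move=> z z' w /hDp [iz zp] /hDp [iz' zp'] e1 e2.
  have pz : p <> z by move=> e; apply: zp; rewrite e.
  have pz' : p <> z' by move=> e; apply: zp'; rewrite e.
  have e := f_ln_inj pz pz' (etrans e1 (esym e2)).
  case: (base_lines_eq ib inp iz inp iz' pz pz' e) => [[_ e']|[e' _]].
    by rewrite e'.
  by case: pz.
have hlen : (length Dc <= length Dp)%coq_nat by move: lb lb' lDp lDc; lia.
have [w [iw ew]] : exists w, List.In w Dc /\ f (lnL x y) = lnL' (g p) w.
  apply: thru => //.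
  rewrite egx; apply: Gp; [exact: (ln_line HL) | exact: lnu].
have [z [iz ez]] := pig_surj (R := fun z w => f (lnL p z) = lnL' (g p) w) ndDp hlen hmaps hinj iw.
have [izb zp] := proj1 (hDp z) iz.
have pz : p <> z by move=> e; apply: zp; rewrite e.
have e := f_ln_inj pz xy (etrans ez (esym ew)).
case: (base_lines_eq ib inp izb inx iy pz xy e) => [[e' _]|[_ e']].
  by apply: px; rewrite e'.
by apply: yp.
Qed.

Lemma gneq p x : p <> x -> g p <> g x.
Proof.
move=> px.
have [b [b' [hb [Xb [hb' hc]]]]] := get_base (indep2 (fun e => px (esym e))).
by apply: (ginj_base hb hb' hc) => //; apply: Xb; inls.
Qed.

Lemma f_ln_g p x : p <> x -> f (lnL p x) = lnL' (g p) (g x).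
Proof.
move=> px; symmetry.
apply: (line_cl2 HL' (Hf (ln_line HL px)) (gneq px)); apply: Gp; try exact: (ln_line HL).
- exact: lnu.
- exact: lnv.
Qed.

End G.

Lemma main_result : exists g : P -> P',
  strong_embedding L L' g /\ (forall l, L l -> f l = lclosure L' (g @` l)).
Proof.
have [g Gp] : exists g : P -> P', forall p l, L l -> l p -> f l (g p).
  exists (fun p => proj1_sig (cid (gex p))).
  move=> p l Ll lp; exact: (proj2_sig (cid (gex p)) l Ll lp).
have H4 := Hn'.
have online : forall a b : P, exists l, L l /\ l a /\ l b.
  move=> a b; case: (classic (a = b)) => [<-|ab].
    have [x hx] := exists_out Hd (t := a :: nil) ltac:(simpl; lia).
    have xa : a <> x by move=> e; apply: hx; apply: cl_ext; left.
    by exists (lnL a x); split; [exact: (ln_line HL)|split; exact: lnu].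
  by exists (lnL a b); split; [exact: (ln_line HL)|split; [exact: lnu|exact: lnv]].
exists g; split.
  split.
  - move=> x y e; apply: NNPP => xy; exact: (gneq Gp xy e).
  - move=> p q r [l [Ll [lp [lq lr]]]]; exists (f l); split; first exact: Hf.
    by split; [exact: Gp|split; exact: Gp].
  - move=> p q r ncol.
    have pq : p <> q.
      move=> e; subst q; have [l [Ll [lp lr]]] := online p r; apply: ncol; by exists l.
    have qr : q <> r.
      move=> e; subst r; have [l [Ll [lp lq]]] := online p q; apply: ncol; by exists l.
    have pr : p <> r.
      move=> e; subst r; have [l [Ll [lp lq]]] := online p q; apply: ncol; by exists l.
    have i2 := indep2 (fun e => pq (esym e)).
    have nr : ~ cl (ls (q :: p :: nil)) r.
      move=> h; apply: ncol; exists (lnL q p); split; first by apply: (ln_line HL) => e; apply: pq.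
      by split; [exact: lnv|split; [exact: lnu|exact: h]].
    have i3 := indep_cons EX i2 nr.
    have [b [b' [hb [Xb [hb' hc]]]]] := get_base i3.
    have ip : List.In p b by apply: Xb; inls.
    have iq : List.In q b by apply: Xb; inls.
    have ir : List.In r b by apply: Xb; inls.
    apply: (three_noncol HL' hb'.2.2.1 (gbase Gp hb hb' hc ip) (gbase Gp hb hb' hc iq)
       (gbase Gp hb hb' hc ir)); apply: gneq => // e; [apply: pr|apply: qr]; by rewrite e.
  - move=> X hX.
    have [b [b' [hb [Xb [hb' hc]]]]] := get_base hX.
    apply: indep_sub hb'.2.2.1 => y [x Xx <-]; exact: (gbase Gp hb hb' hc (Xb x Xx)).
move=> l Ll.
have [u [v [uv [lu lv]]]] := line_two HL Ll.
have el := line_cl2 HL Ll uv lu lv.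
have e2 : f l = lnL' (g u) (g v) by rewrite -el; exact: f_ln_g.
apply/seteqP; split.
  by rewrite e2; apply: ln_sub; [exists u|exists v].
apply: cl_min; first exact: (line_subspace HL' (Hf Ll)).
by move=> y [x lx <-]; exact: Gp.
Qed.

End Main.

Theorem theorem2p3 (P P' : Type) (L : set (set P)) (L' : set (set P')) (n : nat)
  (f : set P -> set P') :
  is_linear_space L -> is_linear_space L' ->
  (4 <= n)%N ->
  dimension L setT n -> dimension L' setT n ->
  exchange_axiom L -> exchange_axiom L' ->
  axiom_P2 L -> axiom_P2 L' ->
  (forall l, L l -> L' (f l)) ->
  (forall l1 l2, L l1 -> L l2 -> f l1 = f l2 -> l1 = l2) ->
  (forall A, is_base_subset L 1 A -> is_base_subset L' 1 (f @` A)) ->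
  exists g : P -> P',
    strong_embedding L L' g /\
    (forall l, L l -> f l = lclosure L' (g @` l)).
Proof.
move=> HL HL' Hn Hd Hd' EX EX' HP2 _ Hf Hfi Hfb.
exact: (main_result HL HL' Hn Hd Hd' EX EX' HP2 Hf Hfi Hfb).
Qed.
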